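(* Let $n,m,k\ge 1$ and let $S$ be a Boolean $n\times m$ matrix. Let $\bar S$ be the Boolean $(n+2)\times(m+2)$ matrix whose first row is all ones, whose first column is all ones, whose remaining entries in the second row and in the second column are $0$, and whose lower-right $n\times m$ block is $S$ (i.e. $\bar s_{ij}=s_{i-2,j-2}$ for $i,j\ge 3$). Then there exist a Boolean $(n+2)\times(k+2)$ matrix $\bar E$ and a Boolean $(k+2)\times(m+2)$ matrix $\bar P$ with $\bar S=\bar E\cdot\bar P$ if and only if there exist a Boolean $n\times k$ matrix $E$ and a Boolean $k\times m$ matrix $P$ with $S=E\cdot P$.
   Context: All matrices are over the Boolean algebra $(\{0,1\},\vee,\wedge)$. The Boolean matrix product of an $n\times k$ matrix $E=(e_{ia})$ and a $k\times m$ matrix $P=(p_{aj})$ is the $n\times m$ matrix $E\cdot P$ with entries $(E\cdot P)_{ij}=\bigvee_{a=1}^{k}(e_{ia}\wedge p_{aj})$. *)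

(* Defs.v *)
From mathcomp Require Import all_boot all_algebra.
Set Implicit Arguments. Unset Strict Implicit. Unset Printing Implicit Defensive.

Definition bmul (n k m : nat) (E : 'M[bool]_(n, k)) (P : 'M[bool]_(k, m))
  : 'M[bool]_(n, m) :=
  \matrix_(i < n, j < m) [exists a : 'I_k, E i a && P a j].

(* The bordered matrix S-bar (0-based indices): row 0 and column 0 are all
   ones; the remaining entries of row 1 and column 1 are 0; entry (i,j) with
   i,j >= 2 is S (i-2) (j-2). *)
Definition sbar (n m : nat) (S : 'M[bool]_(n, m)) : 'M[bool]_(n.+2, m.+2) :=
  \matrix_(i < n.+2, j < m.+2)
    if (i == 0%N :> nat) || (j == 0%N :> nat) then true
    else match @split 2 n i, @split 2 m j with
         | inr i', inr j' => S i' j'   (* i = i' + 2, j = j' + 2 *)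
         | _, _ => false
         end.

(* Main.v *)
Require Import Defs.
From mathcomp Require Import all_boot all_algebra.

Lemma splitL m n (j : 'I_m) : split (lshift n j) = inl j.
Proof. exact: (@unsplitK m n (inl j)). Qed.
Lemma splitR m n (j : 'I_n) : split (rshift m j) = inr j.
Proof. exact: (@unsplitK m n (inr j)). Qed.

Lemma exists_split m n (F : 'I_(m + n) -> bool) :
  [exists a, F a] = [exists a, F (lshift n a)] || [exists a, F (rshift m a)].
Proof.
apply/existsP/orP.
  by case=> a; case: (split_ordP a) => [a0 ->|a1 ->] Fa; [left|right]; apply/existsP; [exists a0|exists a1].
by case=> /existsP [a Fa]; eexists; exact: Fa.
Qed.

Lemma exists_I2 (G : 'I_2 -> bool) : [exists a, G a] = G ord0 || G ord_max.
Proof.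
apply/existsP/orP; last by case=> H; eexists; exact: H.
by case=> -[[|[|a]] Ha] //= Hg; [left|right]; congr (G _): Hg; apply: val_inj.
Qed.

Lemma exists_false (T : finType) : [exists a : T, false] = false.
Proof. by apply/existsP; case. Qed.

Lemma back (n m k : nat) (S : 'M[bool]_(n, m)) (E : 'M[bool]_(n, k)) (P : 'M[bool]_(k, m)) :
  S = bmul E P ->
  exists (Eb : 'M[bool]_(n.+2, k.+2)) (Pb : 'M[bool]_(k.+2, m.+2)), sbar S = bmul Eb Pb.
Proof.
move=> ->.
exists ((\matrix_(i < n.+2, a < k.+2)
  match @split 2 n i, @split 2 k a with
  | inl i0, inl a0 => (i0 == 0%N :> nat) == (a0 == 0%N :> nat)
  | inr _, inl a0 => a0 == 1%N :> nat
  | inl _, inr _ => false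
  | inr i', inr a' => E i' a' end)%R).
exists ((\matrix_(a < k.+2, j < m.+2)
  match @split 2 k a, @split 2 m j with
  | inl a0, inl j0 => (a0 == 0%N :> nat) || (j0 == 0%N :> nat)
  | inl a0, inr _ => a0 == 0%N :> nat
  | inr _, inl _ => false
  | inr a', inr j' => P a' j' end)%R).
apply/matrixP=> i j; rewrite !mxE.
rewrite (@exists_split 2 k) exists_I2.
case: (@split_ordP 2 n i) => [i0 ->|i' ->]; case: (@split_ordP 2 m j) => [j0 ->|j' ->];
  rewrite !mxE !splitL ?splitR /=.
all: try (case: i0 => -[|[|?]] ? //=).
all: try (case: j0 => -[|[|?]] ? //=).
all: rewrite ?andbF ?andbT ?orbF ?orbT.
all: try (by rewrite !mxE !splitR exists_false).
1,2,3: (apply/esym/existsP => -[a]; rewrite !mxE ?splitL ?splitR /= ?andbF).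
all: try by [].
all: try by case.
 all: try (move=> H; exact: (elimF idP H)).

all: first [ by (apply/esym/existsP => -[a]; rewrite !mxE ?splitL ?splitR /=; discriminate)
           | by (apply/existsP/existsP => -[a H]; exists a; move: H; rewrite !mxE !splitR) ].
Qed.

Lemma fwd (n m k : nat) (S : 'M[bool]_(n, m))
  (Eb : 'M[bool]_(n.+2, k.+2)) (Pb : 'M[bool]_(k.+2, m.+2)) :
  sbar S = bmul Eb Pb ->
  exists (E : 'M[bool]_(n, k)) (P : 'M[bool]_(k, m)), S = bmul E P.
Proof.
move=> H.
have He x y : sbar S x y = [exists c, Eb x c && Pb c y] by rewrite H mxE.
pose i0 : 'I_(n.+2) := @Ordinal n.+2 0 isT.
pose i1 : 'I_(n.+2) := @Ordinal n.+2 1 isT.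
pose j0 : 'I_(m.+2) := @Ordinal m.+2 0 isT.
pose j1 : 'I_(m.+2) := @Ordinal m.+2 1 isT.
have S10 : sbar S i1 j0 by rewrite mxE.
have S01 : sbar S i0 j1 by rewrite mxE.
have S1y (y : 'I_m.+2) : (y != 0 :> nat)%N -> sbar S i1 y = false.
  move=> y0; rewrite mxE /= (negbTE y0).
  by case: (@splitP 2 n i1) => [u _|u /= /eqP]; first case: (@split 2 m y).
have Sx1 (x : 'I_n.+2) : (x != 0 :> nat)%N -> sbar S x j1 = false.
  move=> x0; rewrite mxE /= (negbTE x0).
  by case: (@splitP 2 m j1) => [u _|u /= /eqP]; case: (@split 2 n x).
have Sin (i : 'I_n) (j : 'I_m) : sbar S (rshift 2 i) (rshift 2 j) = S i j.
  by rewrite mxE /= !splitR.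
move: S10; rewrite He => /existsP [a /andP [Ea Pa]].
move: S01; rewrite He => /existsP [b /andP [Eb0 Pb1]].
have Fa (y : 'I_m.+2) : (y != 0 :> nat)%N -> Pb a y = false.
  move=> y0; apply/negbTE/negP => Pay.
  move: (S1y y y0); rewrite He.
  suff -> : [exists c, Eb i1 c && Pb c y] by [].
  by apply/existsP; exists a; rewrite Ea Pay.
have Fb (x : 'I_n.+2) : (x != 0 :> nat)%N -> Eb x b = false.
  move=> x0; apply/negbTE/negP => Exb.
  move: (Sx1 x x0); rewrite He.
  suff -> : [exists c, Eb x c && Pb c j1] by [].
  by apply/existsP; exists b; rewrite Exb Pb1.
case: (unliftP a b) => [b' Hb|Hab]; last first.
  by move: Pb1; rewrite Hab Fa.
pose f (d : 'I_k) : 'I_(k.+2) := lift a (lift b' d).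
exists (\matrix_(i < n, d < k) Eb (rshift 2 i) (f d))%R.
exists (\matrix_(d < k, j < m) Pb (f d) (rshift 2 j))%R.
apply/matrixP=> i j; rewrite [RHS]mxE -Sin He.
apply/existsP/existsP.
  move=> [c /andP [Ec Pc]].
  case: (unliftP a c) => [c1 Hc|Hc]; last by move: Pc; rewrite Hc Fa.
  case: (unliftP b' c1) => [d Hd|Hd].
    by exists d; rewrite !mxE /f -Hd -Hc Ec Pc.
  by move: Ec; rewrite Hc Hd -Hb Fb.
by move=> [d]; rewrite !mxE => Hd; exists (f d).
Qed.

Theorem lemma2 (n m k : nat) (hn : (1 <= n)%N) (hm : (1 <= m)%N) (hk : (1 <= k)%N)
  (S : 'M[bool]_(n, m)) :
  (exists (Eb : 'M[bool]_(n.+2, k.+2)) (Pb : 'M[bool]_(k.+2, m.+2)),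
      sbar S = bmul Eb Pb)
  <->
  (exists (E : 'M[bool]_(n, k)) (P : 'M[bool]_(k, m)), S = bmul E P).
Proof.
split; first by move=> [Eb [Pb H]]; exact: fwd H.
by move=> [E [P H]]; exact: back H.
Qed.
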